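(* Let $A=T_n\langle S;T\rangle$ be a Boolean Toeplitz matrix, with $S,T$ nonempty subsets of $\{1,\dots,n-1\}$, such that $\max S+\min T\le n$ and $\min S+\max T\le n$. Then there exists a positive integer $M$ such that for every integer $m>M$, the Boolean power $A^m$ is a Toeplitz matrix.
   Context: Boolean arithmetic on $\{0,1\}$: $1+1=1$. $T_n\langle S;T\rangle$ is the $n\times n$ $(0,1)$-matrix whose $(i,j)$-entry is $1$ iff $j-i\in S$ or $i-j\in T$. A matrix $(c_{ij})$ is Toeplitz if $c_{ij}$ depends only on $j-i$. *)

(* Defs.v *)
From mathcomp Require Import all_boot.
Set Implicit Arguments. Unset Strict Implicit. Unset Printing Implicit Defensive.

Definition bmx (n : nat) := 'I_n -> 'I_n -> bool.

Definition bmul n (A B : bmx n) : bmx n :=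
  fun i j => [exists k : 'I_n, A i k && B k j].

Definition bid n : bmx n := fun i j => i == j.

Fixpoint bpow n (A : bmx n) (m : nat) : bmx n :=
  match m with
  | 0 => @bid n
  | m'.+1 => bmul A (bpow A m')
  end.

(* T_n<S;T>: entry (i,j) is 1 iff j-i in S or i-j in T (differences as integers). *)
Definition toeplitzST n (S T : {set 'I_n}) : bmx n :=
  fun i j => ((i <= j) && [exists s in S, val s == j - i])
          || ((j <= i) && [exists t in T, val t == i - j]).

Definition is_toeplitz n (C : bmx n) : Prop :=
  (* j - i = j' - i' over the integers, written without subtraction *)
  forall i j i' j' : 'I_n, j + i' = j' + i ->
    C i j = C i' j'.

Definition maxS n (S : {set 'I_n}) : nat := \max_(s in S) val s.
Definition minS n (S : {set 'I_n}) : nat := \big[minn/n]_(s in S) val s.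

(* Main.v *)
Require Import Defs.
From mathcomp Require Import all_boot.
From mathcomp Require Import zify.
Set Implicit Arguments. Unset Strict Implicit. Unset Printing Implicit Defensive.
Inductive W (R : nat -> nat -> Prop) : nat -> nat -> nat -> Prop :=
| W0 x : W R 0 x x
| WS m x y z : R x y -> W R m y z -> W R m.+1 x z.

Lemma W_cat R m1 m2 x y z : W R m1 x y -> W R m2 y z -> W R (m1 + m2) x z.
Proof. elim=> [//|k a b c Hab _ IH] H2; rewrite addSn; exact: WS Hab (IH H2). Qed.

Lemma W_rev R m x y : W R m x y -> W (fun a b => R b a) m y x.
Proof.
elim=> [a|k a b c Hab _ IH]; first exact: W0.
rewrite -addn1; apply: (W_cat IH); apply: WS Hab (W0 _ _).
Qed.

Lemma greedy (R : nat -> nat -> Prop) n b :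
  (forall p, p + b < n -> R (p + b) p) ->
  forall k (ups : seq nat) q x z, size ups + q = k ->
  (forall p u, u \in ups -> p + u < n -> R p (p + u)) ->
  (forall u, u \in ups -> u + b <= n) ->
  x < n -> z < n -> x + sumn ups = z + q * b ->
  W R k x z.
Proof.
move=> HR2; elim=> [|k IH] ups q x z Hk HR1 Hub Hx Hz E.
- case: ups Hk E {HR1 Hub} => // ; case: q => // _ /=.
  rewrite addn0 mul0n addn0 => ->; exact: W0.
- case: ups Hk HR1 Hub E => [|u us] Hk HR1 Hub E.
  + case: q Hk E => // q /= [Hk] E.
    move: E; rewrite mulSn addn0 => E.
    have Hq: x = (z + q * b) + b by lia.
    rewrite Hq; apply: WS (HR2 _ _) (IH [::] q _ _ _ _ _ _ Hz _) => //=; try lia.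
  + have HR1' : forall p u', u' \in us -> p + u' < n -> R p (p + u').
      by move=> p u' H; apply: HR1; rewrite inE H orbT.
    have Hub' : forall u', u' \in us -> u' + b <= n.
      by move=> u' H; apply: Hub; rewrite inE H orbT.
    move: Hk E => /= Hk E.
    case: (ltnP (x + u) n) => Hxu.
    * apply: WS (HR1 _ _ _ Hxu) (IH us q _ _ _ HR1' Hub' Hxu Hz _).
      by rewrite inE eqxx. lia. lia.
    * have Hu := Hub u (mem_head _ _).
      case: q Hk E => [|q] Hk E.
      -- exfalso; move: E; rewrite mul0n addn0 => E; lia.
      -- have Hxb : x = (x - b) + b by lia.
         rewrite Hxb; apply: WS (HR2 (x - b) _) _; first lia.
         apply: (IH (u :: us) q) => //=; try lia.
         all: move: E; rewrite mulSn /=; lia.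
Qed.

Lemma sumn_filter1 (v : nat) (l : seq nat) :
  sumn l = sumn (filter (predC1 v) l) + count_mem v l * v.
Proof.
elim: l => [|x l IH] //=; case: (eqVneq x v) => [->|H] /=; rewrite ?eqxx /=;
  rewrite IH mulnDl ?mul1n ?mul0n; move: (sumn _) (count_mem _ _) => A B; lia.
Qed.

Lemma size_filter1 (v : nat) (l : seq nat) :
  size l = size (filter (predC1 v) l) + count_mem v l.
Proof.
elim: l => [|x l IH] //=; case: (eqVneq x v) => [->|H] /=; rewrite ?eqxx /=;
  rewrite IH; move: (size _) (count_mem _ _) => A B; lia.
Qed.

Lemma reduce N (HN : 0 < N) k : forall l : seq nat, all (fun x => x < k) l ->
  exists l' l'' : seq nat, {subset l' <= l} /\ size l' <= k * N /\
   sumn l = sumn l' + N * sumn l'' /\ size l = size l' + N * size l''.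
Proof.
elim: k => [|k IH] l Hl.
- case: l Hl => [|x l] //= _; exists [::], [::]; split; first by [].
  by rewrite /= !muln0.
- have Hf : all (fun x => x < k) (filter (predC1 k) l).
    rewrite all_filter; apply/allP => x Hx /=; apply/implyP => Hxk.
    by have := allP Hl x Hx; rewrite ltnS leq_eqVlt (negbTE Hxk).
  have [l1 [l2 [Hs [Hsz [Hsum Hsize]]]]] := IH _ Hf.
  set c0 := count_mem k l.
  exists (l1 ++ nseq (c0 %% N) k), (l2 ++ nseq (c0 %/ N) k); split; [|split; [|split]].
  + move=> x; rewrite mem_cat => /orP [/Hs|]; first by rewrite mem_filter => /andP [].
    rewrite mem_nseq => /andP [H0 /eqP ->].
    have Hc : 0 < c0.
      by move: H0; rewrite /c0; case: (count_mem k l) => //; rewrite mod0n.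
    by rewrite -has_pred1 has_count.
  + rewrite size_cat size_nseq mulSn; have := ltn_pmod c0 HN; lia.
  + rewrite (sumn_filter1 k l) Hsum !sumn_cat !sumn_nseq -/c0.
    rewrite {1}(divn_eq c0 N); rewrite mulnDr mulnDl; lia.
  + rewrite (size_filter1 k l) Hsize !size_cat !size_nseq -/c0.
    rewrite {1}(divn_eq c0 N); lia.
Qed.

Definition stepR n (S T : {set 'I_n}) (x y : nat) : Prop :=
  x < n /\ y < n /\
  ((exists2 s, s \in S & x + s = y) \/ (exists2 t, t \in T & y + t = x)).

Lemma toeplitz_step n (S T : {set 'I_n}) (i k : 'I_n) :
  toeplitzST S T i k = true <-> stepR S T i k.
Proof.
rewrite /toeplitzST /stepR; split.
- case/orP => /andP [Hik /existsP [s /andP [Hs /eqP Hv]]]; do 2 (split => //).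
  + by left; exists s => //; rewrite Hv; lia.
  + by right; exists s => //; rewrite Hv; lia.
- move=> [_ [_ [[s Hs E]|[t Ht E]]]]; apply/orP.
  + left; apply/andP; split; first lia.
    by apply/existsP; exists s; rewrite Hs /=; apply/eqP; lia.
  + right; apply/andP; split; first lia.
    by apply/existsP; exists t; rewrite Ht /=; apply/eqP; lia.
Qed.

Lemma bpow_W n (S T : {set 'I_n}) m : forall (i j : 'I_n),
  bpow (toeplitzST S T) m i j = true <-> W (stepR S T) m i j.
Proof.
elim: m => [|m IH] i j /=.
- rewrite /bid; split; first by move/eqP => ->; exact: W0.
  by move=> H; inversion H; apply/eqP; apply: val_inj.
- rewrite /bmul; split.
  + case/existsP => k /andP [Hik Hkj].
    by apply: (WS (y := k)); [apply/toeplitz_step | apply/IH].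
  + move=> H; inversion H as [|m0 x y z Hxy Hyz]; subst.
    have Hy : y < n by case: Hxy => _ [].
    apply/existsP; exists (Ordinal Hy); apply/andP; split.
    * by apply/toeplitz_step.
    * by apply/IH.
Qed.

Lemma W_lists n (S T : {set 'I_n}) m x y : W (stepR S T) m x y ->
  exists U D : seq nat,
    (forall u, u \in U -> exists2 s, s \in S & nat_of_ord s = u) /\
    (forall u, u \in D -> exists2 t, t \in T & nat_of_ord t = u) /\
    m = size U + size D /\ x + sumn U = y + sumn D.
Proof.
elim=> [a|k a b c [_ [_ H]] _ [U [D [HU [HD [Hm E]]]]]].
- by exists [::], [::].
- case: H => [[s Hs Es]|[t Ht Et]].
  + exists (nat_of_ord s :: U), D; split; [|split; [by []|split]].
    * move=> u; rewrite inE => /orP [/eqP ->|]; [by exists s | exact: HU].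
    * by rewrite Hm.
    * rewrite /=; lia.
  + exists U, (nat_of_ord t :: D); split; [by []|split; [|split]].
    * move=> u; rewrite inE => /orP [/eqP ->|]; [by exists t | exact: HD].
    * by rewrite Hm /= addnS.
    * rewrite /=; lia.
Qed.

Lemma minS_le n (S : {set 'I_n}) (s : 'I_n) : s \in S -> minS S <= s.
Proof.
move=> Hs; rewrite /minS.
have : s \in index_enum 'I_n by rewrite mem_index_enum.
elim: (index_enum 'I_n) => [|x r IH] //; rewrite inE big_cons => /orP [/eqP <-|Hr].
- by rewrite Hs geq_minl.
- by case: (x \in S); [rewrite geq_min IH ?orbT | exact: IH].
Qed.

Lemma minS_mem n (S : {set 'I_n}) : S != set0 -> exists2 s, s \in S & nat_of_ord s = minS S.
Proof.
case/set0Pn => s0 Hs0.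
have : minS S = n \/ exists2 s, s \in S & nat_of_ord s = minS S.
  rewrite /minS; apply: (big_ind (fun x => x = n \/ exists2 s, s \in S & nat_of_ord s = x)).
  - by left.
  - move=> x y Hx Hy; rewrite /minn; case: ltnP => _; [exact: Hx | exact: Hy].
  - by move=> i Hi; right; exists i.
case=> // H; have := minS_le Hs0; have := ltn_ord s0; lia.
Qed.

Lemma maxS_ge n (S : {set 'I_n}) (s : 'I_n) : s \in S -> nat_of_ord s <= maxS S.
Proof. by move=> Hs; rewrite /maxS; apply: (@leq_bigmax_cond _ (fun i => i \in S) (fun i : 'I_n => nat_of_ord i)). Qed.

Lemma sumn_bound n (l : seq nat) : all (fun x => x < n) l -> sumn l <= n * size l.
Proof. elim: l => [|x l IH] //= /andP [Hx Hl]; have := IH Hl; rewrite mulnS; lia. Qed.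

Lemma main_shift n (S T : {set 'I_n}) :
  S != set0 -> T != set0 ->
  (forall s, s \in S -> 0 < val s) ->
  (forall t, t \in T -> 0 < val t) ->
  maxS S + minS T <= n ->
  minS S + maxS T <= n ->
  forall m, 2 * (n * (minS S + minS T)) +
            (minS S + minS T + 1) * (n + n * (n * (minS S + minS T))) < m ->
  forall i j i' j' : 'I_n, j + i' = j' + i ->
  bpow (toeplitzST S T) m i j -> bpow (toeplitzST S T) m i' j'.
Proof.
move=> HS HT HSp HTp H1 H2 m Hm i j i' j' Eij /bpow_W HW; apply/bpow_W.
have [sc Hsc Ec] := minS_mem HS.
have [tb Htb Eb] := minS_mem HT.
move: Hm H1 H2 Ec Eb; set c := minS S; set b := minS T => Hm H1 H2 Ec Eb.
have Hc : 0 < c by rewrite -Ec; exact: HSp sc Hsc.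
have Hb : 0 < b by rewrite -Eb; exact: HTp tb Htb.
have Hbn : b < n by rewrite -Eb; exact: ltn_ord.
have [N HNd] : exists N, N = c + b by eexists.
have [B HBd] : exists B, B = n * N by eexists.
have [K HKd] : exists K, K = n + n * B by eexists.
rewrite -HNd -HBd -HKd in Hm.
have HN : 0 < N by lia.
have [U [D [HU [HD [Hm0 E0]]]]] := W_lists HW.
have HUa : all (fun x => x < n) U by apply/allP => u /HU [s _ <-]; exact: ltn_ord.
have HDa : all (fun x => x < n) D by apply/allP => u /HD [s _ <-]; exact: ltn_ord.
have [U' [U'' [HsU [HszU [HsumU HsizeU]]]]] := reduce HN HUa.
have [D' [D'' [HsD [HszD [HsumD HsizeD]]]]] := reduce HN HDa.
rewrite -HBd in HszU HszD.
have HbU : sumn U' <= n * B.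
  apply: leq_trans (sumn_bound (n := n) _) _.
    by apply/allP => x /HsU Hx; exact: (allP HUa x Hx).
  by rewrite leq_mul2l HszU orbT.
have HbD : sumn D' <= n * B.
  apply: leq_trans (sumn_bound (n := n) _) _.
    by apply/allP => x /HsD Hx; exact: (allP HDa x Hx).
  by rewrite leq_mul2l HszD orbT.
have [A HAd] : exists A, A = size U'' + size D'' by eexists.
have [m' Hm'd] : exists m', m' = m - size U' - size D' by eexists.
have Hm'A : m' = N * A by rewrite Hm'd HAd mulnDr; lia.
have Hm'big : (N + 1) * K < m' by lia.
have HKN : (N + 1) * K = K + N * K by rewrite addn1 mulSn.
have Hcm : m' <= c * m' by exact: leq_pmull.
have Hbm : m' <= b * m' by exact: leq_pmull.
have HcmA : c * m' = N * (c * A) by rewrite Hm'A mulnCA.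
have Hkey : c * m' + i' + sumn U' + N * sumn U'' =
            j' + sumn D' + N * (c * A + sumn D'').
  rewrite mulnDr; have := ltn_ord i; have := ltn_ord j; lia.
have Hi' := ltn_ord i'. have Hj' := ltn_ord j'.
have HA12 : sumn U'' <= c * A + sumn D''.
  by rewrite -(leq_pmul2l HN); lia.
have [q Hqd] : exists q, q = c * A + sumn D'' - sumn U'' by eexists.
have HX : c * m' + i' + sumn U' = j' + sumn D' + N * q.
  by rewrite Hqd mulnBr; lia.
have HNm : N * m' = c * m' + b * m' by rewrite HNd mulnDl.
have Hqm : q <= m' by rewrite -(leq_pmul2l HN); lia.
have HqK : K < q by rewrite -(ltn_pmul2l HN); lia.
have [q1 Hq1d] : exists q1, q1 = (i' + sumn U') %/ b by eexists.
have [z Hzd] : exists z, z = (i' + sumn U') %% b by eexists.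
have Hq1 : q1 <= i' + sumn U' by rewrite Hq1d leq_div.
have Hz : z < n by rewrite Hzd; apply: leq_trans (ltn_pmod _ Hb) (ltnW Hbn).
have Eq1 : i' + sumn U' = z + q1 * b by rewrite Hzd Hq1d [RHS]addnC -divn_eq.
have Hqq1 : q1 <= q by lia.
have Seg1 : W (stepR S T) (size U' + q1) i' z.
  apply: (greedy (b := b) _ (ups := U') (q := q1) erefl) => //.
  - move=> p Hp; split; first lia; split; first lia.
    by right; exists tb => //; rewrite Eb.
  - move=> p u /HsU /HU [s Hs Es] Hp; split; first lia; split; first lia.
    by left; exists s => //; rewrite Es.
  - move=> u /HsU /HU [s Hs <-]; have := maxS_ge Hs; lia.
set D2 := D' ++ nseq (q - q1) b.
have Seg2 : W (fun a b0 => stepR S T b0 a) (size D2 + (m' - q)) j' z.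
  apply: (greedy (b := c) _ (ups := D2) (q := m' - q) erefl) => //.
  - move=> p Hp; split; first lia; split; first lia.
    by left; exists sc => //; rewrite Ec.
  - move=> p u; rewrite mem_cat => Hu Hp; split; first lia; split; first lia.
    right; case/orP: Hu => [/HsD /HD [t Ht Et]|].
    + by exists t => //; rewrite Et.
    + by rewrite mem_nseq => /andP [_ /eqP ->]; exists tb => //; rewrite Eb.
  - move=> u; rewrite mem_cat => /orP [/HsD /HD [t Ht <-]|].
    + have := maxS_ge Ht; lia.
    + rewrite mem_nseq => /andP [_ /eqP ->]; have := maxS_ge Htb; rewrite Eb; lia.
  - rewrite /D2 sumn_cat sumn_nseq mulnBl mulnBr.
    have : q * c <= m' * c by rewrite leq_mul2r Hqm orbT.
    have : b * q1 <= b * q by rewrite leq_mul2l Hqq1 orbT.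
    have : N * q = c * q + b * q by rewrite HNd mulnDl.
    rewrite (mulnC m' c) (mulnC q c) (mulnC q1 b) in Eq1 *; lia.
have := W_cat Seg1 (W_rev Seg2).
have -> : size U' + q1 + (size D2 + (m' - q)) = m.
  by rewrite /D2 size_cat size_nseq; lia.
by [].
Qed.

Theorem theorem2p10 (n : nat) (S T : {set 'I_n}) :
  S != set0 -> T != set0 ->
  (forall s, s \in S -> 0 < val s) ->
  (forall t, t \in T -> 0 < val t) ->
  maxS S + minS T <= n ->
  minS S + maxS T <= n ->
  exists M : nat, 0 < M /\
    forall m : nat, M < m -> is_toeplitz (bpow (toeplitzST S T) m).
Proof.
move=> HS HT HSp HTp H1 H2.
exists (2 * (n * (minS S + minS T)) +
        (minS S + minS T + 1) * (n + n * (n * (minS S + minS T))) + 1).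
split; first by rewrite addn1.
move=> m Hm i j i' j' E.
have Hm' : 2 * (n * (minS S + minS T)) +
        (minS S + minS T + 1) * (n + n * (n * (minS S + minS T))) < m by lia.
apply/idP/idP; apply: (main_shift HS HT HSp HTp H1 H2 Hm'); lia.
Qed.
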